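(* Let $f:\mathbb{N}\to\mathbb{R}$ with $f(1)=1$. Assume $f(n)=0$ for all even $n$ and there exist $C>0$ and $\gamma\in\mathbb{R}$ such that $|f(n)|\leq Cn^\gamma$ for all $n\geq2$. Then $$|f^{-1}(n)|\leq n^{\gamma+\varsigma}, \quad n\geq2,$$ where $\varsigma>1$ is the unique root of $\left(1-2^{-s}\right)\zeta(s)=\frac{1}{C}+1$. In particular, if $C=1$, then $\varsigma=\eta=1.37779\dots$
   Context: $f^{-1}$ denotes the Dirichlet inverse of $f$: the arithmetic function with $\sum_{d\mid n} f(n/d) f^{-1}(d)=\varepsilon(n)$ for all $n$, where $\varepsilon(1)=1$ and $\varepsilon(n)=0$ for $n\ge2$. $\zeta$ is the Riemann zeta function. *)

(* Defs.v *)
From mathcomp Require Import all_boot all_order all_algebra.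
From mathcomp Require Import all_classical all_reals all_analysis.
Set Implicit Arguments. Unset Strict Implicit. Unset Printing Implicit Defensive.
Import Order.TTheory GRing.Theory Num.Theory.
Local Open Scope ring_scope.

Definition dir_eps (R : realType) (n : nat) : R := if n == 1%N then 1 else 0.

Definition is_dirichlet_inverse (R : realType) (f g : nat -> R) : Prop :=
  forall n : nat, (0 < n)%N ->
    \sum_(d <- divisors n) f (n %/ d)%N * g d = dir_eps R n.

(* Riemann zeta function on reals: zeta s = sum_{k >= 1} k^{-s}
   (limit of partial sums; meaningful for s > 1) *)
Definition zeta (R : realType) (s : R) : R :=
  limn (fun N : nat => \sum_(1 <= k < N) (k%:R `^ (- s))).

(* Main.v *)
Require Import Defs.
From mathcomp Require Import all_boot all_order all_algebra.
From mathcomp Require Import all_classical all_reals all_analysis.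
From mathcomp Require Import ring lra zify.
Import Order.TTheory GRing.Theory Num.Theory.
Import numFieldNormedType.Exports.
Local Open Scope classical_set_scope.
Local Open Scope ring_scope.

Section Aux.
Variable R : realType.

Definition tt_ (s : R) (k : nat) : R := k%:R `^ (- s).

Lemma tt_exp s k : (0 < k)%N -> tt_ s k = expR (- s * ln k%:R).
Proof. by move=> k0; rewrite /tt_ /powR pnatr_eq0 gtn_eqF. Qed.

Lemma tt0 s : s != 0 -> tt_ s 0 = 0.
Proof. by move=> s0; rewrite /tt_ /powR eqxx oppr_eq0 (negbTE s0). Qed.

Lemma tt_ge0 s k : 0 <= tt_ s k.
Proof. exact: powR_ge0. Qed.

Lemma ln_nat_ge0 k : (0 < k)%N -> 0 <= ln (k%:R : R).
Proof. case: k => [|k] // _. by apply: ln_ge0; rewrite ler1n. Qed.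

Lemma expR_ge (x : R) : x <= expR x.
Proof. by apply: le_trans (expR_ge1Dx x); rewrite lerDr. Qed.

Lemma expdiff (u v : R) : expR u - expR v <= (u - v) * expR u.
Proof.
have := expR_ge1Dx (v - u); rewrite expRB => h.
have e0 := expR_gt0 u.
rewrite -(ler_pM2r e0) mulfVK ?gt_eqF // mulrDl mul1r in h.
rewrite mulrBl; lra.
Qed.

Lemma ln_sub (a b : R) : 0 < a -> 0 < b -> ln a - ln b <= a / b - 1.
Proof.
move=> a0 b0; have := expR_ge1Dx (ln a - ln b).
rewrite expRB !lnK ?posrE //; lra.
Qed.

Lemma expR_lnV (m : nat) : (0 < m)%N -> expR (- ln (m%:R : R)) = m%:R^-1.
Proof. by move=> m0; rewrite expRN lnK // posrE ltr0n. Qed.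

Lemma K1 (a : R) m : 0 < a -> (0 < m)%N ->
  a * tt_ (1 + a) m.+1 <= tt_ a m - tt_ a m.+1.
Proof.
move=> a0 m0; rewrite !tt_exp //.
set u := ln (m%:R : R); set v := ln (m.+1%:R : R).
have h1 := expdiff (- a * v) (- a * u).
have mp : 0 < (m%:R : R) by rewrite ltr0n.
have h2 := @ln_sub (m%:R) (m.+1%:R) mp (ltr0Sn _ _).
have h3 : expR (- (1 + a) * v) = expR (- a * v) * m.+1%:R^-1.
  by rewrite -expR_lnV // -expRD; congr expR; rewrite /v; ring.
rewrite h3.
have hK : 0 < (m.+1%:R : R) by rewrite ltr0n.
have hw : m%:R / m.+1%:R - 1 = - (m.+1%:R : R)^-1.
  have eK : (m%:R : R) = m.+1%:R - 1 by rewrite -natr1 addrK.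
  by rewrite eK; field; rewrite gt_eqF.
rewrite hw -/u -/v in h2.
have E0 := expR_gt0 (- a * v).
have : a * expR (- a * v) * m.+1%:R^-1 <= a * expR (- a * v) * (v - u).
  by rewrite ler_pM2l ?mulr_gt0 //; clear -h2; clearbody u v; move: h2; move: (m.+1%:R : R)^-1 => w; lra.
rewrite mulrA => /le_trans; apply.
have e : (- a * v - - a * u) * expR (- a * v) = - (a * expR (- a * v) * (v - u)) by ring.
rewrite e in h1.
lra.
Qed.

Lemma K2 (a : R) m : 0 < a -> (0 < m)%N ->
  tt_ a m - tt_ a m.+1 <= a * tt_ (1 + a) m.
Proof.
move=> a0 m0; rewrite !tt_exp //.
set u := ln (m%:R : R); set v := ln (m.+1%:R : R).
have h1 := expdiff (- a * u) (- a * v).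
have mp : 0 < (m%:R : R) by rewrite ltr0n.
have h2 := @ln_sub (m.+1%:R) (m%:R) (ltr0Sn _ _) mp.
have h3 : expR (- (1 + a) * u) = expR (- a * u) * m%:R^-1.
  by rewrite -expR_lnV // -expRD; congr expR; rewrite /u; ring.
rewrite h3.
have hK : 0 < (m%:R : R) by rewrite ltr0n.
have hw : m.+1%:R / m%:R - 1 = (m%:R : R)^-1.
  rewrite -natr1; field; by rewrite pnatr_eq0 -lt0n.
rewrite hw -/u -/v in h2.
have E0 := expR_gt0 (- a * u).
have : a * expR (- a * u) * (v - u) <= a * expR (- a * u) * m%:R^-1.
  by rewrite ler_pM2l ?mulr_gt0 //; clear -h2; clearbody u v; move: h2; move: (m%:R : R)^-1 => w; lra.
move=> h; rewrite mulrA; apply: le_trans h.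
have e : (- a * u - - a * v) * expR (- a * u) = a * expR (- a * u) * (v - u) by ring.
rewrite e in h1.
lra.
Qed.

Lemma tt1 s : tt_ s 1 = 1.
Proof. by rewrite /tt_ powR1. Qed.

Definition S_ (s : R) (N : nat) : R := \sum_(k < N) tt_ s k.

Lemma S_rec s N : S_ s N.+1 = S_ s N + tt_ s N.
Proof. by rewrite /S_ big_ord_recr. Qed.

Lemma S_nd s : nondecreasing_seq (S_ s).
Proof. by apply/nondecreasing_seqP => n; rewrite S_rec lerDl tt_ge0. Qed.

Lemma S_ub (a : R) N : 0 < a -> a * S_ (1 + a) N.+2 + tt_ a N.+1 <= a + 1.
Proof.
move=> a0; elim: N => [|N IH].
  rewrite /S_ !big_ord_recr big_ord0 /= tt0 ?tt1; last by rewrite gt_eqF // ltr_pwDr.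
  lra.
have := @K1 a N.+1 a0 (ltn0Sn _); rewrite S_rec; lra.
Qed.

Lemma S_lb (a : R) N : 0 < a -> 1 <= a * S_ (1 + a) N.+1 + tt_ a N.+1.
Proof.
move=> a0; elim: N => [|N IH].
  rewrite /S_ !big_ord_recr big_ord0 /= tt0 ?tt1; last by rewrite gt_eqF // ltr_pwDr.
  lra.
have := @K2 a N.+1 a0 (ltn0Sn _); rewrite S_rec; lra.
Qed.

Lemma S_le (a : R) N : 0 < a -> a * S_ (1 + a) N <= a + 1.
Proof.
move=> a0; have h := @S_ub a N a0.
have : S_ (1 + a) N <= S_ (1 + a) N.+2 by apply: S_nd; rewrite leqW.
rewrite -(ler_pM2l a0).
have := tt_ge0 a N.+1; lra.
Qed.

Lemma zetaE (s : R) : s != 0 -> zeta s = limn (S_ s).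
Proof.
move=> s0; rewrite /zeta.
suff -> : (fun N : nat => \sum_(1 <= k < N) (k%:R `^ (- s))) = S_ s by [].
apply: funext => N.
case: N => [|N]; first by rewrite /S_ big_ord0 big_geq.
by rewrite /S_ -(big_mkord xpredT (tt_ s)) (big_ltn (ltn0Sn N)) tt0 // add0r.
Qed.

Definition q_ (s : R) (k : nat) : R := if odd k then tt_ s k else 0.
Definition Q_ (s : R) (N : nat) : R := \sum_(k < N) q_ s k.

Lemma q_ge0 s k : 0 <= q_ s k.
Proof. by rewrite /q_; case: ifP => // _; exact: tt_ge0. Qed.

Lemma Q_rec s N : Q_ s N.+1 = Q_ s N + q_ s N.
Proof. by rewrite /Q_ big_ord_recr. Qed.

Lemma Q_nd s : nondecreasing_seq (Q_ s).
Proof. by apply/nondecreasing_seqP => n; rewrite Q_rec lerDl q_ge0. Qed.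

Lemma tt_double s k : tt_ s k.*2 = 2 `^ (- s) * tt_ s k.
Proof. by rewrite /tt_ -muln2 natrM powRM // mulrC. Qed.

Lemma Q_double s N : s != 0 -> Q_ s N.*2 = S_ s N.*2 - 2 `^ (- s) * S_ s N.
Proof.
move=> s0; elim: N => [|N IH].
  by rewrite /Q_ /S_ !big_ord0 mulr0 subr0.
rewrite doubleS !Q_rec !S_rec IH /q_ /= odd_double /= tt_double; ring.
Qed.

Lemma S_bound (s : R) N : 1 < s -> S_ s N <= 1 + (s - 1)^-1.
Proof.
move=> s1; have a0 : 0 < s - 1 by rewrite subr_gt0.
have e : 1 + (s - 1) = s by ring.
have := @S_le (s - 1) N a0; rewrite e => h.
rewrite -(ler_pM2l a0) mulrDr mulfV ?gt_eqF //; lra.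
Qed.

Lemma S_cvg (s : R) : 1 < s -> S_ s @ \oo --> zeta s.
Proof.
move=> s1; rewrite zetaE ?gt_eqF ?(lt_trans ltr01) //.
apply: nondecreasing_is_cvgn; first exact: S_nd.
by exists (1 + (s - 1)^-1) => _ [n _ <-]; exact: S_bound.
Qed.

Lemma cvg_double (u : nat -> R) (l : R) : u @ \oo --> l -> (fun n => u n.*2) @ \oo --> l.
Proof.
move=> h; apply: cvg_comp h; move=> A [N _ HA]; exists N => // n /= Hn.
by apply: HA; rewrite -addnn; apply: leq_trans Hn (leq_addr _ _).
Qed.

Definition O_ (s : R) : R := (1 - 2 `^ (- s)) * zeta s.

Lemma Q_cvg (s : R) : 1 < s -> (fun N => Q_ s N.*2) @ \oo --> O_ s.
Proof.
move=> s1; have s0 : s != 0 by rewrite gt_eqF // (lt_trans ltr01).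
have -> : (fun N => Q_ s N.*2) = (fun N => S_ s N.*2 - 2 `^ (- s) * S_ s N).
  by apply: funext => N; rewrite Q_double.
have -> : O_ s = zeta s - 2 `^ (- s) * zeta s by rewrite /O_; ring.
have h1 := @cvg_double (S_ s) (zeta s) (@S_cvg s s1).
have h2 : (fun n => 2 `^ (- s) * S_ s n) @ \oo --> 2 `^ (- s) * zeta s by apply: cvgMl_tmp; exact: S_cvg.
exact: (cvgB h1 h2).
Qed.

Lemma O_ge (s : R) M : 1 < s -> Q_ s M <= O_ s.
Proof.
move=> s1; apply: (cvgr_to_ge (@Q_cvg s s1)); near=> N.
apply: Q_nd; rewrite -addnn; apply: leq_trans (leq_addr _ _).
by near: N; exact: nbhs_infty_ge.
Unshelve. all: by end_near.
Qed.

Lemma q_le_tt s k : q_ s k <= tt_ s k.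
Proof. by rewrite /q_; case: ifP => // _; exact: tt_ge0. Qed.

Lemma O_le (s : R) : 1 < s -> O_ s <= 1 + (s - 1)^-1.
Proof.
move=> s1; apply: (cvgr_to_le (@Q_cvg s s1)); near=> N.
apply: le_trans (@S_bound s N.*2 s1); rewrite /Q_ /S_; apply: ler_sum => k _.
exact: q_le_tt.
Unshelve. all: by end_near.
Qed.

Lemma zeta_ge (s : R) N : 1 < s -> S_ s N <= zeta s.
Proof.
move=> s1; apply: (cvgr_to_ge (@S_cvg s s1)); near=> M.
apply: S_nd; by near: M; exact: nbhs_infty_ge.
Unshelve. all: by end_near.
Qed.

Lemma pow2_le (s : R) : 1 <= s -> 2 `^ (- s) <= 2^-1.
Proof.
move=> s1; rewrite -[2 `^ _]/(tt_ s 2) (@tt_exp s 2 isT) -(@expR_lnV 2) // ler_expR.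
have : 0 < ln (2%:R : R) by rewrite ln_gt0 // ltr1n.
move: (ln (2%:R : R)) => l l0; rewrite mulNr lerN2 -{1}(mul1r l).
by rewrite ler_pM2r.
Qed.

Lemma tt_small (a : R) : 0 < a -> exists m, (0 < m)%N /\ tt_ a m <= 2^-1.
Proof.
move=> a0; set m := (Num.truncn (expR a^-1)).+1.
have hm : expR a^-1 <= m%:R.
  by have /andP[_ /ltW] := truncn_itv (ltW (expR_gt0 a^-1)).
have m0 : (0 < m)%N by [].
exists m; split => //.
have mp : 0 < (m%:R : R) by rewrite ltr0n.
have hl : a^-1 <= ln (m%:R : R).
  by rewrite -(expRK a^-1) ler_ln // posrE expR_gt0.
have h1 : 1 <= a * ln (m%:R : R).
  by rewrite -[leLHS](mulfV (lt0r_neq0 a0)) ler_pM2l.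
rewrite tt_exp // mulNr expRN.
have h2 := expR_ge1Dx (a * ln (m%:R : R)).
rewrite -[leRHS]invrK lef_pV2 ?posrE ?invr_gt0 ?expR_gt0 //; lra.
Qed.

Lemma O_big (a : R) : 0 < a -> (4 * a)^-1 <= O_ (1 + a).
Proof.
move=> a0; have s1 : 1 < 1 + a by rewrite ltrDl.
have [m [m0 hm]] := @tt_small a a0.
have hS := @S_lb a m.-1 a0; rewrite prednK // in hS.
have hz := @zeta_ge (1 + a) m s1.
have hp := @pow2_le (1 + a) (ltW s1).
have hs : 2^-1 <= a * S_ (1 + a) m by lra.
rewrite /O_.
have hz2 : 2^-1 <= a * zeta (1 + a).
  by apply: le_trans hs _; rewrite ler_pM2l.
have hz0 : 0 <= zeta (1 + a).
  by apply: le_trans hz; rewrite /S_ sumr_ge0 // => k _; exact: tt_ge0.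
have h3 : 2^-1 * zeta (1 + a) <= (1 - 2 `^ (- (1 + a))) * zeta (1 + a).
  by rewrite ler_wpM2r //; lra.
apply: le_trans h3.
have h4 : a^-1 * 2^-1 <= zeta (1 + a).
  have : a^-1 * 2^-1 <= a^-1 * (a * zeta (1 + a)) by rewrite ler_pM2l ?invr_gt0.
  by rewrite mulKf ?lt0r_neq0.
have -> : (4 * a)^-1 = 2^-1 * (a^-1 * 2^-1).
  by field; rewrite lt0r_neq0.
by rewrite ler_pM2l.
Qed.

Lemma q_lip (a x y : R) k : 1 < a -> a <= x -> x <= y ->
  0 <= q_ x k - q_ y k <= (y - x) * (((a - 1) / 2)^-1 * tt_ (1 + (a - 1) / 2) k).
Proof.
move=> a1 ax xy; set b := (a - 1) / 2.
have b0 : 0 < b by rewrite /b divr_gt0 // subr_gt0.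
have yx : 0 <= y - x by rewrite subr_ge0.
rewrite /q_; case: ifP => ok; last first.
  rewrite subrr lexx /=; apply: mulr_ge0 => //; apply: mulr_ge0; [by rewrite invr_ge0 ltW | exact: tt_ge0].
have k0 : (0 < k)%N by rewrite odd_gt0.
rewrite !tt_exp //; set l := ln (k%:R : R).
have l0 : 0 <= l by exact: ln_nat_ge0.
have yl : 0 <= (y - x) * l by rewrite mulr_ge0.
have xl : 0 <= (x - a) * l by rewrite mulr_ge0 // subr_ge0.
apply/andP; split.
  rewrite subr_ge0 ler_expR; lra.
have h1 := expdiff (- x * l) (- y * l).
have e1 : (- x * l - - y * l) * expR (- x * l) = (y - x) * (l * expR (- x * l)) by ring.
rewrite e1 in h1; apply: le_trans h1 _; rewrite ler_wpM2l //.
have h2 : l * expR (- x * l) <= l * expR (- a * l).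
  by rewrite ler_wpM2l // ler_expR; lra.
apply: le_trans h2 _.
have h3 : expR (- (1 + b) * l) = expR (b * l) * expR (- a * l).
  by rewrite -expRD; congr expR; rewrite /b; field.
rewrite h3 mulrA ler_wpM2r ?(ltW (expR_gt0 _)) //.
have h4 := expR_ge (b * l).
have : b^-1 * (b * l) <= b^-1 * expR (b * l) by rewrite ler_pM2l ?invr_gt0.
by rewrite mulKf ?lt0r_neq0.
Qed.

Lemma Q_lip (a x y : R) N : 1 < a -> a <= x -> x <= y ->
  0 <= Q_ x N - Q_ y N <= (y - x) * (((a - 1) / 2)^-1 * (1 + ((a - 1) / 2)^-1)).
Proof.
move=> a1 ax xy; set b := (a - 1) / 2.
have b0 : 0 < b by rewrite /b divr_gt0 // subr_gt0.
have yx : 0 <= y - x by rewrite subr_ge0.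
rewrite /Q_ -sumrB; apply/andP; split.
  by apply: sumr_ge0 => k _; have /andP[] := @q_lip a x y k a1 ax xy.
apply: le_trans (_ : \sum_(k < N) (y - x) * (b^-1 * tt_ (1 + b) k) <= _).
  by apply: ler_sum => k _; have /andP[] := @q_lip a x y k a1 ax xy.
rewrite -mulr_sumr -mulr_sumr ler_wpM2l // ler_pM2l ?invr_gt0 //.
have := @S_bound (1 + b) N; rewrite ltrDl => /(_ b0).
by have -> : 1 + b - 1 = b by ring.
Qed.

Lemma O_lip (a x y : R) : 1 < a -> a <= x -> x <= y ->
  0 <= O_ x - O_ y <= (y - x) * (((a - 1) / 2)^-1 * (1 + ((a - 1) / 2)^-1)).
Proof.
move=> a1 ax xy.
have x1 : 1 < x by apply: lt_le_trans ax.
have y1 : 1 < y by apply: lt_le_trans xy.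
have hc : (fun N => Q_ x N.*2 - Q_ y N.*2) @ \oo --> O_ x - O_ y.
  exact: (cvgB (@Q_cvg x x1) (@Q_cvg y y1)).
apply/andP; split.
  apply: (cvgr_to_ge hc); near=> N.
  by have /andP[] := @Q_lip a x y N.*2 a1 ax xy.
apply: (cvgr_to_le hc); near=> N.
by have /andP[] := @Q_lip a x y N.*2 a1 ax xy.
Unshelve. all: by end_near.
Qed.

Lemma Q_diff3 (x y : R) M : 1 < x -> x <= y -> (4 <= M)%N ->
  q_ x 3 - q_ y 3 <= Q_ x M - Q_ y M.
Proof.
move=> x1 xy /subnK <-; elim: (M - 4)%N => [|n IH].
  rewrite add0n !Q_rec /Q_ !big_ord0 /q_ /= !tt1; lra.
rewrite addSn !Q_rec.
have /andP[h _] := @q_lip x x y (n + 4)%N x1 (lexx x) xy.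
lra.
Qed.

Lemma O_strict (x y : R) : 1 < x -> x < y -> O_ y < O_ x.
Proof.
move=> x1 xy.
have y1 : 1 < y by apply: lt_trans xy.
have hc : (fun N => Q_ x N.*2 - Q_ y N.*2) @ \oo --> O_ x - O_ y.
  exact: (cvgB (@Q_cvg x x1) (@Q_cvg y y1)).
have d0 : 0 < q_ x 3 - q_ y 3.
  rewrite /q_ /= !tt_exp // subr_gt0 ltr_expR.
  have : 0 < (y - x) * ln (3%:R : R) by rewrite mulr_gt0 ?subr_gt0 // ln_gt0 // ltr1n.
  lra.
have : q_ x 3 - q_ y 3 <= O_ x - O_ y.
  apply: (cvgr_to_ge hc); near=> N.
  apply: Q_diff3 => //; first exact: ltW.
  by near: N; exists 2%N => // n /= n2; rewrite -addnn (leq_add n2 n2).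
lra.
Unshelve. all: by end_near.
Qed.

Definition clamp (a x : R) := if x <= a then a else x.

Lemma clampE (a x : R) : (x <= a /\ clamp a x = a) \/ (a < x /\ clamp a x = x).
Proof.
rewrite /clamp; case: ifP => h; first by left.
by right; split => //; rewrite ltNge h.
Qed.

Lemma F_lip (a L : R) : 1 < a -> L = ((a - 1) / 2)^-1 * (1 + ((a - 1) / 2)^-1) ->
  forall x y, `|O_ (clamp a x) - O_ (clamp a y)| <= L * `|x - y|.
Proof.
move=> a1 ->; set LL := _ * _.
have L0 : 0 <= LL.
  by rewrite /LL mulr_ge0 // ?invr_ge0 ?addr_ge0 ?invr_ge0 ?divr_ge0 // subr_ge0 ltW.
suff key : forall x y, x <= y ->
    `|O_ (clamp a x) - O_ (clamp a y)| <= LL * `|x - y|.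
  move=> x y; case: (leP x y) => [|/ltW] h; first exact: key.
  by rewrite distrC (distrC x); exact: key.
move=> x y xy.
have key2 : forall u v, a <= u -> u <= v -> v - u <= y - x ->
    `|O_ u - O_ v| <= LL * `|x - y|.
  move=> u v au uv vu.
  have /andP[h1 h2] := @O_lip a _ _ a1 au uv.
  rewrite ger0_norm // distrC ger0_norm ?subr_ge0 //.
  apply: le_trans h2 _; rewrite mulrC ler_wpM2l //.
have [[hx1 hx2]|[hx1 hx2]] := clampE a x; have [[hy1 hy2]|[hy1 hy2]] := clampE a y;
  rewrite hx2 hy2; apply: key2; lra.
Qed.

Lemma F_cont (a : R) : 1 < a -> continuous (fun x => O_ (clamp a x)).
Proof.
move=> a1 x; set L := ((a - 1) / 2)^-1 * (1 + ((a - 1) / 2)^-1).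
have hL := @F_lip a L a1 erefl.
have L0 : 0 <= L.
  by rewrite /L mulr_ge0 // ?invr_ge0 ?addr_ge0 ?invr_ge0 ?divr_ge0 // subr_ge0 ltW.
apply/cvgrPdist_le => e e0.
apply/nbhs_ballP; exists (e / (L + 1)); first by rewrite /= divr_gt0 // ltr_wpDl.
move=> t; rewrite /ball /= => hxt.
apply: le_trans (hL x t) _.
have L1 : 0 < L + 1 by rewrite ltr_wpDl.
have : L * `|x - t| <= L * (e / (L + 1)) by rewrite ler_wpM2l // ltW.
move/le_trans; apply.
rewrite mulrA ler_pdivrMr // mulrDr mulr1 mulrC lerDl ltW //.
Qed.

Lemma O_exists (c : R) : 1 < c -> exists s, 1 < s /\ O_ s = c.
Proof.
move=> c1.
set a := (4 * (c + 1))^-1.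
have c0 : 0 < c + 1 by lra.
have a0 : 0 < a by rewrite /a invr_gt0 mulr_gt0.
set slo := 1 + a.
have slo1 : 1 < slo by rewrite /slo ltrDl.
have e4 : (4 * a)^-1 = c + 1 by rewrite /a; field; rewrite lt0r_neq0.
have hlo : c + 1 <= O_ slo by have := @O_big a a0; rewrite e4.
set d := 2 / (c - 1).
have d0 : 0 < d by rewrite /d divr_gt0 // subr_gt0.
set shi := slo + d.
have shi1 : 1 < shi by rewrite /shi (lt_le_trans slo1) // lerDl ltW.
have hhi : O_ shi < c.
  apply: le_lt_trans (@O_le shi shi1) _.
  have e1 : shi - 1 = a + d by rewrite /shi /slo; ring.
  rewrite e1.
  have : (a + d)^-1 <= d^-1 by rewrite lef_pV2 ?posrE ?addr_gt0 // lerDr ltW.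
  have -> : d^-1 = (c - 1) / 2 by rewrite /d invf_div.
  lra.
have lohi : slo <= shi by rewrite /shi lerDl ltW.
have Fc : {within `[slo, shi], continuous (fun x => O_ (clamp slo x))}.
  by apply: continuous_subspaceT; exact: F_cont.
have cl1 : clamp slo slo = slo by rewrite /clamp lexx.
have cl2 : clamp slo shi = shi.
  by rewrite /clamp; case: ifP => // h; apply/eqP; rewrite eq_le h lohi.
have [s hs Fs] := IVT lohi Fc (v := c) (ltac:(rewrite /= cl1 cl2 ge_min le_max; apply/andP; split; apply/orP; [right|left]; lra)).
move: hs; rewrite in_itv /= => /andP[hs1 hs2].
exists s; split; first exact: lt_le_trans hs1.
move: Fs; rewrite /clamp; case: ifP => // h.
by have -> : s = slo by apply/eqP; rewrite eq_le h hs1.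
Qed.

Lemma sum_sub_uniq (F : nat -> R) (s t : seq nat) : uniq s -> uniq t ->
  {subset s <= t} -> (forall k, 0 <= F k) ->
  \sum_(k <- s) F k <= \sum_(k <- t) F k.
Proof.
move=> us ut st F0; rewrite [X in _ <= X](bigID (mem s)) /=.
have -> : \sum_(k <- t | k \in s) F k = \sum_(k <- s) F k.
  rewrite -big_filter; apply: perm_big; apply: uniq_perm => //.
    exact: filter_uniq.
  move=> k; rewrite mem_filter; case ks: (k \in s) => //=.
  exact: st.
by rewrite lerDl sumr_ge0.
Qed.

Lemma powE (m : nat) (x : R) : (0 < m)%N -> m%:R `^ x = expR (x * ln m%:R).
Proof. by move=> m0; rewrite /powR pnatr_eq0 gtn_eqF. Qed.

Lemma pow_ident (k d : nat) (g s : R) : (0 < k)%N -> (0 < d)%N ->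
  k%:R `^ g * d%:R `^ (g + s) = (k * d)%:R `^ (g + s) * k%:R `^ (- s).
Proof.
move=> k0 d0; rewrite !powE ?muln_gt0 ?k0 //.
rewrite natrM lnM ?posrE ?ltr0n // -!expRD; congr expR; ring.
Qed.

Lemma inv_bound (f g : nat -> R) (C gamma s : R) :
  f 1%N = 1 ->
  (forall n : nat, (0 < n)%N -> ~~ odd n -> f n = 0) ->
  0 < C ->
  (forall n : nat, (2 <= n)%N -> `|f n| <= C * (n%:R `^ gamma)) ->
  is_dirichlet_inverse f g -> 1 < s -> O_ s = C^-1 + 1 ->
  forall n, (0 < n)%N -> `|g n| <= n%:R `^ (gamma + s).
Proof.
move=> f1 fev C0 fb dinv s1 Os n; elim/ltn_ind: n => n IH n0.
have E := dinv n n0.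
case: (ltngtP n 1) => [h|n1|n1]; first by rewrite ltnS leqn0 in h; rewrite (eqP h) in n0.
  have [n' en] : exists n', n = n'.+2 by case: n n0 n1 IH E => [|[|n']] //; exists n'.
  pose L := [seq d <- iota 0 n | (d %| n)%N].
  have hperm : perm_eq (divisors n) (n :: L).
    apply: uniq_perm; first exact: divisors_uniq.
      rewrite /= mem_filter mem_iota ltnn !andbF /=.
      by apply: filter_uniq; exact: iota_uniq.
    move=> d; rewrite -dvdn_divisors // inE mem_filter mem_iota add0n /=.
    case: (ltngtP d n) => [dn|dn|->]; rewrite ?andbT ?andbF ?orbF ?dvdnn //=.
    by apply/negbTE; apply: contraTN isT => /(dvdn_leq n0); rewrite leqNgt dn.
  rewrite (perm_big _ hperm) big_cons divnn n0 f1 mul1r /dir_eps gtn_eqF // in E.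
  have gE : g n = - \sum_(d <- L) f (n %/ d)%N * g d.
    by apply/eqP; rewrite -addr_eq0 E.
  set P := n%:R `^ (gamma + s).
  have P0 : 0 <= P by exact: powR_ge0.
  have hterm : forall d, d \in L ->
      `|f (n %/ d)%N * g d| <= C * P * q_ s (n %/ d)%N.
    move=> d; rewrite mem_filter mem_iota add0n /= => /andP[dn dlt].
    have d0 : (0 < d)%N.
      by rewrite lt0n; apply: contraTneq dn => ->; rewrite dvd0n gtn_eqF.
    set k := (n %/ d)%N.
    have nkd : n = (k * d)%N by rewrite /k divnK.
    have k2 : (1 < k)%N.
      rewrite ltnNge; apply/negP => hk.
      by move: dlt; rewrite {1}nkd; nia.
    have k0 : (0 < k)%N by apply: ltn_trans k2.
    rewrite /q_; case: ifP => ok; last first.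
      by rewrite fev ?ok // mul0r normr0 mulr0.
    rewrite normrM.
    have h1 := fb k k2.
    have h2 := IH d dlt d0.
    apply: le_trans (ler_pM (normr_ge0 _) (normr_ge0 _) h1 h2) _.
    by rewrite -[leLHS]mulrA pow_ident // -nkd -/P /tt_ mulrA.
  have hsum : `|g n| <= \sum_(d <- L) C * P * q_ s (n %/ d)%N.
    rewrite gE normrN; apply: le_trans (ler_norm_sum _ _ _) _.
    rewrite big_seq_cond [X in _ <= X]big_seq_cond; apply: ler_sum => d /andP[dL _].
    exact: hterm.
  apply: le_trans hsum _.
  rewrite -mulr_sumr.
  have hM : \sum_(d <- L) q_ s (n %/ d)%N <= \sum_(2 <= k < n.+1) q_ s k.
    rewrite -(big_map (fun d => (n %/ d)%N) xpredT).
    apply: sum_sub_uniq; last exact: q_ge0.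
    - rewrite map_inj_in_uniq; first by apply: filter_uniq; exact: iota_uniq.
      move=> d1 d2; rewrite !mem_filter !mem_iota !add0n /= => /andP[h1 _] /andP[h2 _] e.
      have p1 : (0 < d1)%N.
        by rewrite lt0n; apply: contraTneq h1 => ->; rewrite dvd0n gtn_eqF.
      have p2 : (0 < d2)%N.
        by rewrite lt0n; apply: contraTneq h2 => ->; rewrite dvd0n gtn_eqF.
      have e1 := divnK h1; have e2 := divnK h2.
      rewrite e in e1.
      have kp : (0 < n %/ d2)%N by rewrite divn_gt0 // dvdn_leq.
      by apply/eqP; rewrite -(eqn_pmul2l kp) e1 e2.
    - exact: iota_uniq.
    - move=> k /mapP[d]; rewrite mem_filter mem_iota add0n /= => /andP[dn dlt] ->.
      rewrite mem_index_iota ltnS leq_div andbT.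
      have d0 : (0 < d)%N.
        by rewrite lt0n; apply: contraTneq dn => ->; rewrite dvd0n gtn_eqF.
      have nkd := divnK dn.
      rewrite ltnNge; apply/negP => hk.
      by move: dlt; rewrite -{1}nkd; nia.
  have hQ : 1 + \sum_(2 <= k < n.+1) q_ s k = Q_ s n.+1.
    have h1n : (1 < n.+1)%N by rewrite ltnS.
    rewrite /Q_ -(big_mkord xpredT (q_ s)) (big_ltn (ltn0Sn n)) (big_ltn h1n).
    by rewrite /q_ /= tt1 add0r.
  have := @O_ge s n.+1 s1; rewrite -hQ Os => hO.
  have hC : C * P * \sum_(d <- L) q_ s (n %/ d)%N <= C * P * C^-1.
    have hs : \sum_(d <- L) q_ s (n %/ d)%N <= C^-1.
      apply: le_trans hM _; move: hO; move: (\sum_(2 <= k < n.+1) q_ s k) => z.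
      move: (C^-1) => w; lra.
    by rewrite ler_wpM2l // mulr_ge0 // ltW.
  apply: le_trans hC _.
  by rewrite mulrC mulrA mulVf ?lt0r_neq0 // mul1r.
subst n; have d1 : divisors 1 = [:: 1%N] by [].
rewrite d1 big_seq1 divn1 f1 mul1r /dir_eps eqxx in E.
by rewrite E powR1 normr1.
Qed.
End Aux.

Theorem proposition3p17 (R : realType) (f finv : nat -> R) (C gamma : R) :
  f 1%N = 1 ->
  (forall n : nat, (0 < n)%N -> ~~ odd n -> f n = 0) ->
  0 < C ->
  (forall n : nat, (2 <= n)%N -> `|f n| <= C * (n%:R `^ gamma)) ->
  is_dirichlet_inverse f finv ->
  (exists! s : R, 1 < s /\ (1 - 2 `^ (- s)) * zeta s = C^-1 + 1) /\
  (forall s : R, 1 < s -> (1 - 2 `^ (- s)) * zeta s = C^-1 + 1 ->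
     forall n : nat, (2 <= n)%N -> `|finv n| <= n%:R `^ (gamma + s)).
Proof.
move=> f1 fev C0 fb dinv.
have c1 : 1 < C^-1 + 1 by rewrite ltrDr invr_gt0.
split.
  have [s [s1 Os]] := @O_exists R _ c1.
  exists s; split; first by split.
  move=> t [t1 Ot].
  have Ot' : O_ R t = C^-1 + 1 by [].
  case: (ltgtP t s) => // h.
    by have := @O_strict R t s t1 h; rewrite Os Ot' ltxx.
  by have := @O_strict R s t s1 h; rewrite Os Ot' ltxx.
move=> s s1 Os n n2.
apply: (@inv_bound R f finv C gamma s) => //.
exact: ltnW.
Qed.
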